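(* Let $d_1,d_2,d_3,d_4\in\mathbb{C}^*$ satisfy $\sum_{k=1}^4 1/d_k=0$. There exists a quadratic Hamiltonian vector field on $\mathbb{C}^2$ with four distinct non-degenerate singular points $p_1,\dots,p_4$ such that the multiset $\{\det Dv(p_k)\}_{k=1}^4$ equals $\{d_1,\dots,d_4\}$ if and only if one of the following holds: (1) $d_j+d_k\ne0$ for all $j\ne k$; or (2) $\{d_1,\dots,d_4\}=\{d,-d,d,-d\}$ as multisets, for some $d\in\mathbb{C}^*$.
   Context: A quadratic Hamiltonian vector field is $v=P\,\partial_x+Q\,\partial_y$ with $\deg P,\deg Q\le 2$ and $P_x+Q_y\equiv0$. $Dv$ is the Jacobian matrix of $(P,Q)$. A singular point $p$ is non-degenerate if $\det Dv(p)\ne0$. For such $v$, $\operatorname{tr}Dv\equiv0$, so the spectrum at each singular point is determined by $\det Dv(p)$. *)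

(* Defs.v *)
(* The field of complex numbers is modelled by an arbitrary
   numClosedFieldType C (algebraically closed, characteristic 0). *)
From HB Require Import structures.
From mathcomp Require Import all_boot all_order all_algebra.
Set Implicit Arguments. Unset Strict Implicit. Unset Printing Implicit Defensive.
Import Order.TTheory GRing.Theory Num.Theory.
Local Open Scope ring_scope.

Record qpoly (R : nzRingType) := QPoly {
  c00 : R; c10 : R; c01 : R; c20 : R; c11 : R; c02 : R }.

Definition qeval (R : comNzRingType) (f : qpoly R) (p : R * R) : R :=
  let: (x, y) := p in
  c00 f + c10 f * x + c01 f * y + c20 f * x ^+ 2 + c11 f * x * y + c02 f * y ^+ 2.

Definition qdx (R : comNzRingType) (f : qpoly R) (p : R * R) : R :=
  let: (x, y) := p in c10 f + c20 f *+ 2 * x + c11 f * y.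
Definition qdy (R : comNzRingType) (f : qpoly R) (p : R * R) : R :=
  let: (x, y) := p in c01 f + c11 f * x + c02 f *+ 2 * y.

Record qvf (R : nzRingType) := QVF { vP : qpoly R; vQ : qpoly R }.

Definition hamiltonian (R : comNzRingType) (v : qvf R) : Prop :=
  forall p : R * R, qdx (vP v) p + qdy (vQ v) p = 0.

Definition Dv (R : comNzRingType) (v : qvf R) (p : R * R) : 'M[R]_2 :=
  \matrix_(i < 2, j < 2)
    if i == 0 :> nat then (if j == 0 :> nat then qdx (vP v) p else qdy (vP v) p)
    else (if j == 0 :> nat then qdx (vQ v) p else qdy (vQ v) p).

Definition singular_pt (R : comNzRingType) (v : qvf R) (p : R * R) : Prop :=
  qeval (vP v) p = 0 /\ qeval (vQ v) p = 0.

Definition nondegenerate (R : comNzRingType) (v : qvf R) (p : R * R) : Prop :=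
  \det (Dv v p) != 0.

(* Main.v *)
Require Import Defs.
From HB Require Import structures.
From mathcomp Require Import all_boot all_order all_algebra.
From mathcomp Require Import ring lra zify.
Import Defs.
Set Implicit Arguments. Unset Strict Implicit. Unset Printing Implicit Defensive.
Import Order.TTheory GRing.Theory Num.Theory.
Local Open Scope ring_scope.

Record cf (C : numClosedFieldType) := CF
  { a0 : C; a1 : C; a2 : C; a3 : C; a5 : C; b0 : C; b1 : C; b3 : C; b5 : C }.

Section S.
Context {C : numClosedFieldType}.
Implicit Types (k : cf C).
Definition Pp k (x y : C) := a0 k + a1 k * x + a2 k * y + a3 k * x^+2 - 2 * b5 k * x * y + a5 k * y^+2.
Definition Qp k (x y : C) := b0 k + b1 k * x - a1 k * y + b3 k * x^+2 - 2 * a3 k * x * y + b5 k * y^+2.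
Definition Px k (x y : C) := a1 k + 2 * a3 k * x - 2 * b5 k * y.
Definition Py k (x y : C) := a2 k - 2 * b5 k * x + 2 * a5 k * y.
Definition Qx k (x y : C) := b1 k + 2 * b3 k * x - 2 * a3 k * y.
Definition dt k (x y : C) := - (Px k x y)^+2 - Py k x y * Qx k x y.
Definition t11 k (u1 u2 : C) := 2 * a3 k * u1 - 2 * b5 k * u2.
Definition t12 k (u1 u2 : C) := - (2 * b5 k * u1) + 2 * a5 k * u2.
Definition t21 k (u1 u2 : C) := 2 * b3 k * u1 - 2 * a3 k * u2.
Definition qf k (u1 u2 : C) := - (t11 k u1 u2)^+2 - t12 k u1 u2 * t21 k u1 u2.
Definition P2 k (w1 w2 : C) := a3 k * w1^+2 - 2 * b5 k * w1 * w2 + a5 k * w2^+2.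
Definition Q2 k (w1 w2 : C) := b3 k * w1^+2 - 2 * a3 k * w1 * w2 + b5 k * w2^+2.
Definition Ae1 k (c1 c2 w1 w2 : C) := Px k c1 c2 * w1 + Py k c1 c2 * w2.
Definition Ae2 k (c1 c2 w1 w2 : C) := Qx k c1 c2 * w1 - Px k c1 c2 * w2.
Definition Kf1 k (z1 z2 w1 w2 : C) := t11 k z1 z2 * w1 + t12 k z1 z2 * w2.
Definition Kf2 k (z1 z2 w1 w2 : C) := t21 k z1 z2 * w1 - t11 k z1 z2 * w2.

Lemma two0 (x : C) : 2 * x = 0 -> x = 0.
Proof. by move/eqP; rewrite mulf_eq0 pnatr_eq0 /= => /eqP. Qed.

Lemma vec0 (x w1 w2 : C) : ~ (w1 = 0 /\ w2 = 0) -> x * w1 = 0 -> x * w2 = 0 -> x = 0.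
Proof.
move=> hw /eqP h1 /eqP h2; move: h1 h2; rewrite !mulf_eq0.
case: (x =P 0) => // _ /= /eqP h1 /eqP h2; by case: hw.
Qed.

Lemma mulnz (m x : C) : m != 0 -> m * x = 0 -> x = 0.
Proof. by move=> hm /eqP; rewrite mulf_eq0 (negbTE hm) /= => /eqP. Qed.

Lemma sq0 (x : C) : x ^+ 2 = 0 -> x = 0.
Proof. by move/eqP; rewrite expf_eq0 /= => /eqP. Qed.
End S.

Ltac unf := rewrite /dt /qf /Ae1 /Ae2 /Kf1 /Kf2 /Pp /Qp /Px /Py /Qx /t11 /t12 /t21 /P2 /Q2.

Lemma L4 (C : numClosedFieldType) (k : cf C) (c1 c2 w1 w2 e1 e2 m : C) :
  Pp k (c1 - w1) (c2 - w2) = 0 -> Qp k (c1 - w1) (c2 - w2) = 0 ->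
  Pp k (c1 + w1) (c2 + w2) = 0 -> Qp k (c1 + w1) (c2 + w2) = 0 ->
  Pp k (e1 - m * w1) (e2 - m * w2) = 0 -> Qp k (e1 - m * w1) (e2 - m * w2) = 0 ->
  Pp k (e1 + m * w1) (e2 + m * w2) = 0 -> Qp k (e1 + m * w1) (e2 + m * w2) = 0 ->
  ~ (w1 = 0 /\ w2 = 0) -> m != 0 ->
  dt k (c1 - w1) (c2 - w2) != 0 ->
  dt k (c1 - w1) (c2 - w2) + dt k (c1 + w1) (c2 + w2) = 0 ->
  ~ (e1 - m * w1 = c1 - w1 /\ e2 - m * w2 = c2 - w2) ->
  ~ (e1 - m * w1 = c1 + w1 /\ e2 - m * w2 = c2 + w2) ->
  m ^+ 2 = 1 /\ dt k (e1 - m * w1) (e2 - m * w2) = - m * dt k (c1 - w1) (c2 - w2).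
Proof.
move=> H1P H1Q H2P H2Q H3P H3Q H4P H4Q Hw Hm Hh1 Hsum H31 H32.
have hA1 : Ae1 k c1 c2 w1 w2 = 0.
  apply: two0; have -> : 2 * Ae1 k c1 c2 w1 w2 = Pp k (c1 + w1) (c2 + w2) - Pp k (c1 - w1) (c2 - w2) by unf; ring.
  by rewrite H1P H2P subr0.
have hA2 : Ae2 k c1 c2 w1 w2 = 0.
  apply: two0; have -> : 2 * Ae2 k c1 c2 w1 w2 = Qp k (c1 + w1) (c2 + w2) - Qp k (c1 - w1) (c2 - w2) by unf; ring.
  by rewrite H1Q H2Q subr0.
have hB1 : Pp k c1 c2 + P2 k w1 w2 = 0.
  apply: two0; have -> : 2 * (Pp k c1 c2 + P2 k w1 w2) = Pp k (c1 + w1) (c2 + w2) + Pp k (c1 - w1) (c2 - w2) by unf; ring.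
  by rewrite H1P H2P addr0.
have hB2 : Qp k c1 c2 + Q2 k w1 w2 = 0.
  apply: two0; have -> : 2 * (Qp k c1 c2 + Q2 k w1 w2) = Qp k (c1 + w1) (c2 + w2) + Qp k (c1 - w1) (c2 - w2) by unf; ring.
  by rewrite H1Q H2Q addr0.
have hA1e : Ae1 k e1 e2 w1 w2 = 0.
  apply: two0; apply: (mulnz Hm).
  have -> : m * (2 * Ae1 k e1 e2 w1 w2) = Pp k (e1 + m * w1) (e2 + m * w2) - Pp k (e1 - m * w1) (e2 - m * w2) by unf; ring.
  by rewrite H3P H4P subr0.
have hA2e : Ae2 k e1 e2 w1 w2 = 0.
  apply: two0; apply: (mulnz Hm).
  have -> : m * (2 * Ae2 k e1 e2 w1 w2) = Qp k (e1 + m * w1) (e2 + m * w2) - Qp k (e1 - m * w1) (e2 - m * w2) by unf; ring.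
  by rewrite H3Q H4Q subr0.
have hB1e : Pp k e1 e2 + m ^+ 2 * P2 k w1 w2 = 0.
  apply: two0; have -> : 2 * (Pp k e1 e2 + m ^+ 2 * P2 k w1 w2) = Pp k (e1 + m * w1) (e2 + m * w2) + Pp k (e1 - m * w1) (e2 - m * w2) by unf; ring.
  by rewrite H3P H4P addr0.
have hB2e : Qp k e1 e2 + m ^+ 2 * Q2 k w1 w2 = 0.
  apply: two0; have -> : 2 * (Qp k e1 e2 + m ^+ 2 * Q2 k w1 w2) = Qp k (e1 + m * w1) (e2 + m * w2) + Qp k (e1 - m * w1) (e2 - m * w2) by unf; ring.
  by rewrite H3Q H4Q addr0.
have hdc : dt k c1 c2 = 0.
  apply: (vec0 Hw).
    have -> : dt k c1 c2 * w1 = - Px k c1 c2 * Ae1 k c1 c2 w1 w2 - Py k c1 c2 * Ae2 k c1 c2 w1 w2. by unf; ring.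
    by rewrite hA1 hA2 !mulr0 subr0.
  have -> : dt k c1 c2 * w2 = - Qx k c1 c2 * Ae1 k c1 c2 w1 w2 + Px k c1 c2 * Ae2 k c1 c2 w1 w2 by unf; ring.
  by rewrite hA1 hA2 !mulr0 addr0.
have hqw : qf k w1 w2 = 0.
  apply: two0; have -> : 2 * qf k w1 w2 = dt k (c1 - w1) (c2 - w2) + dt k (c1 + w1) (c2 + w2) - 2 * dt k c1 c2 by unf; ring.
  by rewrite Hsum hdc mulr0 subr0.
have hK1 : Kf1 k (e1 - c1) (e2 - c2) w1 w2 = 0.
  have -> : Kf1 k (e1 - c1) (e2 - c2) w1 w2 = Ae1 k e1 e2 w1 w2 - Ae1 k c1 c2 w1 w2 by unf; ring.
  by rewrite hA1 hA1e subr0.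
have hK2 : Kf2 k (e1 - c1) (e2 - c2) w1 w2 = 0.
  have -> : Kf2 k (e1 - c1) (e2 - c2) w1 w2 = Ae2 k e1 e2 w1 w2 - Ae2 k c1 c2 w1 w2 by unf; ring.
  by rewrite hA2 hA2e subr0.
have hW : (1 - m ^+ 2) * (w1 * Q2 k w1 w2 - w2 * P2 k w1 w2) = 0.
  apply: two0.
  have -> : 2 * ((1 - m ^+ 2) * (w1 * Q2 k w1 w2 - w2 * P2 k w1 w2)) =
     2 * ((e1 - c1) * Ae2 k c1 c2 w1 w2 - (e2 - c2) * Ae1 k c1 c2 w1 w2)
     + (e1 - c1) * Kf2 k (e1 - c1) (e2 - c2) w1 w2 - (e2 - c2) * Kf1 k (e1 - c1) (e2 - c2) w1 w2
     - 2 * (w1 * ((Qp k e1 e2 + m ^+ 2 * Q2 k w1 w2) - (Qp k c1 c2 + Q2 k w1 w2))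
            - w2 * ((Pp k e1 e2 + m ^+ 2 * P2 k w1 w2) - (Pp k c1 c2 + P2 k w1 w2))) by unf; ring.
  by rewrite hA1 hA2 hK1 hK2 hB1 hB2 hB1e hB2e; ring.

have hWn : w1 * Q2 k w1 w2 - w2 * P2 k w1 w2 != 0.
  apply/eqP => hW0.
  have hP2 : P2 k w1 w2 = 0.
    apply: two0; apply: sq0.
    have -> : (2 * P2 k w1 w2) ^+ 2 = - 2 * t12 k w1 w2 * (w1 * Q2 k w1 w2 - w2 * P2 k w1 w2) - qf k w1 w2 * w1 ^+ 2 by unf; ring.
    by rewrite hW0 hqw; ring.
  have hQ2 : Q2 k w1 w2 = 0.
    apply: two0; apply: sq0.
    have -> : (2 * Q2 k w1 w2) ^+ 2 = 2 * t21 k w1 w2 * (w1 * Q2 k w1 w2 - w2 * P2 k w1 w2) - qf k w1 w2 * w2 ^+ 2 by unf; ring.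
    by rewrite hW0 hqw; ring.
  move/eqP: Hh1; apply; apply: (vec0 Hw).
    have -> : dt k (c1 - w1) (c2 - w2) * w1 = - Px k (c1 - w1) (c2 - w2) * (Ae1 k c1 c2 w1 w2 - 2 * P2 k w1 w2) - Py k (c1 - w1) (c2 - w2) * (Ae2 k c1 c2 w1 w2 - 2 * Q2 k w1 w2) by unf; ring.
    by rewrite hA1 hA2 hP2 hQ2; ring.
  have -> : dt k (c1 - w1) (c2 - w2) * w2 = - Qx k (c1 - w1) (c2 - w2) * (Ae1 k c1 c2 w1 w2 - 2 * P2 k w1 w2) + Px k (c1 - w1) (c2 - w2) * (Ae2 k c1 c2 w1 w2 - 2 * Q2 k w1 w2) by unf; ring.
  by rewrite hA1 hA2 hP2 hQ2; ring.
have hm2 : m ^+ 2 = 1.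
  move/eqP: hW; rewrite mulf_eq0 (negbTE hWn) orbF subr_eq0 => /eqP; done.
split=> //.
have hm1 : m = 1 \/ m = -1.
  have : (m - 1) * (m + 1) = 0 by rewrite -subr_sqr hm2 expr1n subrr.
  move/eqP; rewrite mulf_eq0 subr_eq0 addr_eq0 => /orP[] /eqP; by [left|right].
have hOm : w1 * (e2 - c2) - w2 * (e1 - c1) != 0.
  apply/eqP => hO.
  have e11 : (e1 - c1) * P2 k w1 w2 = 0.
    apply: two0; have -> : 2 * ((e1 - c1) * P2 k w1 w2) = w1 * Kf1 k (e1 - c1) (e2 - c2) w1 w2 - t12 k w1 w2 * (w1 * (e2 - c2) - w2 * (e1 - c1)) by unf; ring.
    by rewrite hK1 hO; ring.
  have e12 : (e2 - c2) * P2 k w1 w2 = 0.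
    apply: two0; have -> : 2 * ((e2 - c2) * P2 k w1 w2) = w2 * Kf1 k (e1 - c1) (e2 - c2) w1 w2 + t11 k w1 w2 * (w1 * (e2 - c2) - w2 * (e1 - c1)) by unf; ring.
    by rewrite hK1 hO; ring.
  have e21 : (e1 - c1) * Q2 k w1 w2 = 0.
    apply: two0; have -> : 2 * ((e1 - c1) * Q2 k w1 w2) = w1 * Kf2 k (e1 - c1) (e2 - c2) w1 w2 + t11 k w1 w2 * (w1 * (e2 - c2) - w2 * (e1 - c1)) by unf; ring.
    by rewrite hK2 hO; ring.
  have e22 : (e2 - c2) * Q2 k w1 w2 = 0.
    apply: two0; have -> : 2 * ((e2 - c2) * Q2 k w1 w2) = w2 * Kf2 k (e1 - c1) (e2 - c2) w1 w2 + t21 k w1 w2 * (w1 * (e2 - c2) - w2 * (e1 - c1)) by unf; ring.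
    by rewrite hK2 hO; ring.
  have hz : e1 - c1 = 0 /\ e2 - c2 = 0.
    have [hP|hP] := eqVneq (P2 k w1 w2) 0.
      have hQ : Q2 k w1 w2 != 0 by apply: contraNneq hWn => ->; rewrite hP; apply/eqP; ring.
      by split; apply: (mulnz hQ); rewrite mulrC.
    by split; apply: (mulnz hP); rewrite mulrC.
  case: hz => /eqP; rewrite subr_eq0 => /eqP he1 /eqP; rewrite subr_eq0 => /eqP he2.
  case: hm1 => hm; rewrite he1 he2 hm in H31 H32.
    by apply: H31; split; ring.
  by apply: H32; split; ring.
have hNw1 : (2 * Px k c1 c2 + t11 k (e1 - c1) (e2 - c2)) * w1 + (2 * Py k c1 c2 + t12 k (e1 - c1) (e2 - c2)) * w2 = 0.
  have -> : (2 * Px k c1 c2 + t11 k (e1 - c1) (e2 - c2)) * w1 + (2 * Py k c1 c2 + t12 k (e1 - c1) (e2 - c2)) * w2 = 2 * Ae1 k c1 c2 w1 w2 + Kf1 k (e1 - c1) (e2 - c2) w1 w2 by unf; ring.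
  by rewrite hA1 hK1; ring.
have hNw2 : (2 * Qx k c1 c2 + t21 k (e1 - c1) (e2 - c2)) * w1 - (2 * Px k c1 c2 + t11 k (e1 - c1) (e2 - c2)) * w2 = 0.
  have -> : (2 * Qx k c1 c2 + t21 k (e1 - c1) (e2 - c2)) * w1 - (2 * Px k c1 c2 + t11 k (e1 - c1) (e2 - c2)) * w2 = 2 * Ae2 k c1 c2 w1 w2 + Kf2 k (e1 - c1) (e2 - c2) w1 w2 by unf; ring.
  by rewrite hA2 hK2; ring.
have hNz1 : (2 * Px k c1 c2 + t11 k (e1 - c1) (e2 - c2)) * (e1 - c1) + (2 * Py k c1 c2 + t12 k (e1 - c1) (e2 - c2)) * (e2 - c2) = 0.
  have -> : (2 * Px k c1 c2 + t11 k (e1 - c1) (e2 - c2)) * (e1 - c1) + (2 * Py k c1 c2 + t12 k (e1 - c1) (e2 - c2)) * (e2 - c2) = 2 * ((Pp k e1 e2 + m ^+ 2 * P2 k w1 w2) - (Pp k c1 c2 + P2 k w1 w2) + (1 - m ^+ 2) * P2 k w1 w2) by unf; ring.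
  by rewrite hB1e hB1 hm2; ring.
have hNz2 : (2 * Qx k c1 c2 + t21 k (e1 - c1) (e2 - c2)) * (e1 - c1) - (2 * Px k c1 c2 + t11 k (e1 - c1) (e2 - c2)) * (e2 - c2) = 0.
  have -> : (2 * Qx k c1 c2 + t21 k (e1 - c1) (e2 - c2)) * (e1 - c1) - (2 * Px k c1 c2 + t11 k (e1 - c1) (e2 - c2)) * (e2 - c2) = 2 * ((Qp k e1 e2 + m ^+ 2 * Q2 k w1 w2) - (Qp k c1 c2 + Q2 k w1 w2) + (1 - m ^+ 2) * Q2 k w1 w2) by unf; ring.
  by rewrite hB2e hB2 hm2; ring.
have hn11 : 2 * Px k c1 c2 + t11 k (e1 - c1) (e2 - c2) = 0.
  apply: (mulnz hOm).
  have -> : (w1 * (e2 - c2) - w2 * (e1 - c1)) * (2 * Px k c1 c2 + t11 k (e1 - c1) (e2 - c2)) =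
    (e2 - c2) * ((2 * Px k c1 c2 + t11 k (e1 - c1) (e2 - c2)) * w1 + (2 * Py k c1 c2 + t12 k (e1 - c1) (e2 - c2)) * w2)
    - w2 * ((2 * Px k c1 c2 + t11 k (e1 - c1) (e2 - c2)) * (e1 - c1) + (2 * Py k c1 c2 + t12 k (e1 - c1) (e2 - c2)) * (e2 - c2)) by ring.
  by rewrite hNw1 hNz1; ring.
have hn12 : 2 * Py k c1 c2 + t12 k (e1 - c1) (e2 - c2) = 0.
  apply: (mulnz hOm).
  have -> : (w1 * (e2 - c2) - w2 * (e1 - c1)) * (2 * Py k c1 c2 + t12 k (e1 - c1) (e2 - c2)) =
    w1 * ((2 * Px k c1 c2 + t11 k (e1 - c1) (e2 - c2)) * (e1 - c1) + (2 * Py k c1 c2 + t12 k (e1 - c1) (e2 - c2)) * (e2 - c2))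
    - (e1 - c1) * ((2 * Px k c1 c2 + t11 k (e1 - c1) (e2 - c2)) * w1 + (2 * Py k c1 c2 + t12 k (e1 - c1) (e2 - c2)) * w2) by ring.
  by rewrite hNw1 hNz1; ring.
have hn21 : 2 * Qx k c1 c2 + t21 k (e1 - c1) (e2 - c2) = 0.
  apply: (mulnz hOm).
  have -> : (w1 * (e2 - c2) - w2 * (e1 - c1)) * (2 * Qx k c1 c2 + t21 k (e1 - c1) (e2 - c2)) =
    (e2 - c2) * ((2 * Qx k c1 c2 + t21 k (e1 - c1) (e2 - c2)) * w1 - (2 * Px k c1 c2 + t11 k (e1 - c1) (e2 - c2)) * w2)
    - w2 * ((2 * Qx k c1 c2 + t21 k (e1 - c1) (e2 - c2)) * (e1 - c1) - (2 * Px k c1 c2 + t11 k (e1 - c1) (e2 - c2)) * (e2 - c2)) by ring.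
  by rewrite hNw2 hNz2; ring.
have hqz : qf k (e1 - c1) (e2 - c2) = 0.
  apply: (vec0 Hw).
    have -> : qf k (e1 - c1) (e2 - c2) * w1 = - t11 k (e1 - c1) (e2 - c2) * Kf1 k (e1 - c1) (e2 - c2) w1 w2 - t12 k (e1 - c1) (e2 - c2) * Kf2 k (e1 - c1) (e2 - c2) w1 w2 by unf; ring.
    by rewrite hK1 hK2; ring.
  have -> : qf k (e1 - c1) (e2 - c2) * w2 = - t21 k (e1 - c1) (e2 - c2) * Kf1 k (e1 - c1) (e2 - c2) w1 w2 + t11 k (e1 - c1) (e2 - c2) * Kf2 k (e1 - c1) (e2 - c2) w1 w2 by unf; ring.
  by rewrite hK1 hK2; ring.
have h4 : (4 : C) != 0 by rewrite pnatr_eq0.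
suff : 4 * (dt k (e1 - m * w1) (e2 - m * w2) + m * dt k (c1 - w1) (c2 - w2)) = 0.
  by move/(mulnz h4)/eqP; rewrite addr_eq0 => /eqP ->; rewrite mulNr.
have -> : 4 * (dt k (e1 - m * w1) (e2 - m * w2) + m * dt k (c1 - w1) (c2 - w2)) =
   - ((2 * Px k c1 c2 + t11 k (e1 - c1) (e2 - c2)) + t11 k (e1 - c1) (e2 - c2) - 2 * m * t11 k w1 w2) ^+ 2
   - ((2 * Py k c1 c2 + t12 k (e1 - c1) (e2 - c2)) + t12 k (e1 - c1) (e2 - c2) - 2 * m * t12 k w1 w2)
     * ((2 * Qx k c1 c2 + t21 k (e1 - c1) (e2 - c2)) + t21 k (e1 - c1) (e2 - c2) - 2 * m * t21 k w1 w2)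
   + m * (- ((2 * Px k c1 c2 + t11 k (e1 - c1) (e2 - c2)) - t11 k (e1 - c1) (e2 - c2) - 2 * t11 k w1 w2) ^+ 2
   - ((2 * Py k c1 c2 + t12 k (e1 - c1) (e2 - c2)) - t12 k (e1 - c1) (e2 - c2) - 2 * t12 k w1 w2)
     * ((2 * Qx k c1 c2 + t21 k (e1 - c1) (e2 - c2)) - t21 k (e1 - c1) (e2 - c2) - 2 * t21 k w1 w2)) by unf; ring.
rewrite hn11 hn12 hn21.
have -> : - (0 + t11 k (e1 - c1) (e2 - c2) - 2 * m * t11 k w1 w2) ^+ 2
   - (0 + t12 k (e1 - c1) (e2 - c2) - 2 * m * t12 k w1 w2)
     * (0 + t21 k (e1 - c1) (e2 - c2) - 2 * m * t21 k w1 w2)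
   + m * (- (0 - t11 k (e1 - c1) (e2 - c2) - 2 * t11 k w1 w2) ^+ 2
   - (0 - t12 k (e1 - c1) (e2 - c2) - 2 * t12 k w1 w2)
     * (0 - t21 k (e1 - c1) (e2 - c2) - 2 * t21 k w1 w2))
   = (1 + m) * qf k (e1 - c1) (e2 - c2) + 4 * (m ^+ 2 + m) * qf k w1 w2 by unf; ring.
by rewrite hqz hqw; ring.
Qed.

Lemma L4' (C : numClosedFieldType) (k : cf C) (x1 y1 x2 y2 x3 y3 x4 y4 c1 c2 w1 w2 e1 e2 m : C) :
  x1 = c1 - w1 -> y1 = c2 - w2 -> x2 = c1 + w1 -> y2 = c2 + w2 ->
  x3 = e1 - m * w1 -> y3 = e2 - m * w2 -> x4 = e1 + m * w1 -> y4 = e2 + m * w2 ->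
  Pp k x1 y1 = 0 -> Qp k x1 y1 = 0 -> Pp k x2 y2 = 0 -> Qp k x2 y2 = 0 ->
  Pp k x3 y3 = 0 -> Qp k x3 y3 = 0 -> Pp k x4 y4 = 0 -> Qp k x4 y4 = 0 ->
  ~ (w1 = 0 /\ w2 = 0) -> m != 0 ->
  dt k x1 y1 != 0 -> dt k x1 y1 + dt k x2 y2 = 0 ->
  ~ (x3 = x1 /\ y3 = y1) -> ~ (x3 = x2 /\ y3 = y2) ->
  m ^+ 2 = 1 /\ dt k x3 y3 = - m * dt k x1 y1.
Proof. move=> -> -> -> -> -> -> -> ->; exact: L4. Qed.

Lemma pairsum (C : numClosedFieldType) (k : cf C) x y x' y' :
  Pp k x y = 0 -> Qp k x y = 0 -> Pp k x' y' = 0 -> Qp k x' y' = 0 ->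
  ~ (x = x' /\ y = y') -> 2 * (dt k x y + dt k x' y') = qf k (x'-x) (y'-y).
Proof.
move=> h1 h2 h3 h4 hne; apply/eqP; rewrite -subr_eq0; apply/eqP.
apply: (@vec0 _ _ (x' - x) (y' - y)).
- case=> /eqP; rewrite subr_eq0 => /eqP ? /eqP; rewrite subr_eq0 => /eqP ?; by apply: hne.
- have -> : (2 * (dt k x y + dt k x' y') - qf k (x'-x) (y'-y)) * (x' - x) =
    - 2 * (Px k x y + Px k x' y') * (Pp k x' y' - Pp k x y)
    - 2 * (Py k x y + Py k x' y') * (Qp k x' y' - Qp k x y) by unf; ring.
  by rewrite h1 h2 h3 h4; ring.
- have -> : (2 * (dt k x y + dt k x' y') - qf k (x'-x) (y'-y)) * (y' - y) =
    - 2 * (Qx k x y + Qx k x' y') * (Pp k x' y' - Pp k x y)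
    + 2 * (Px k x y + Px k x' y') * (Qp k x' y' - Qp k x y) by unf; ring.
  by rewrite h1 h2 h3 h4; ring.
Qed.

Lemma par (C : numClosedFieldType) (al be ga w1 w2 v1 v2 u1 u2 : C) :
  al * w1 ^+ 2 + be * w1 * w2 + ga * w2 ^+ 2 = 0 ->
  al * v1 ^+ 2 + be * v1 * v2 + ga * v2 ^+ 2 = 0 ->
  2 * al * w1 * v1 + be * (w1 * v2 + w2 * v1) + 2 * ga * w2 * v2 = 0 ->
  al * u1 ^+ 2 + be * u1 * u2 + ga * u2 ^+ 2 != 0 ->
  w1 * v2 = w2 * v1.
Proof.
move=> hw hv hb hu; apply/eqP; rewrite -subr_eq0; apply/eqP.
have hD : (be ^+ 2 - 4 * al * ga) * (w1 * v2 - w2 * v1) ^+ 2 = 0.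
  have -> : (be ^+ 2 - 4 * al * ga) * (w1 * v2 - w2 * v1) ^+ 2 =
     (2 * al * w1 * v1 + be * (w1 * v2 + w2 * v1) + 2 * ga * w2 * v2) ^+ 2
     - 4 * (al * w1 ^+ 2 + be * w1 * w2 + ga * w2 ^+ 2) * (al * v1 ^+ 2 + be * v1 * v2 + ga * v2 ^+ 2) by ring.
  by rewrite hw hv hb; ring.
have [hD0|hD0] := eqVneq (be ^+ 2 - 4 * al * ga) 0; last first.
  by apply: sq0; apply: (mulnz hD0).
have Lw : 2 * al * w1 + be * w2 = 0.
  apply: sq0; have -> : (2 * al * w1 + be * w2) ^+ 2 = 4 * al * (al * w1 ^+ 2 + be * w1 * w2 + ga * w2 ^+ 2) + (be ^+ 2 - 4 * al * ga) * w2 ^+ 2 by ring.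
  by rewrite hw hD0; ring.
have Lv : 2 * al * v1 + be * v2 = 0.
  apply: sq0; have -> : (2 * al * v1 + be * v2) ^+ 2 = 4 * al * (al * v1 ^+ 2 + be * v1 * v2 + ga * v2 ^+ 2) + (be ^+ 2 - 4 * al * ga) * v2 ^+ 2 by ring.
  by rewrite hv hD0; ring.
have Mw : 2 * ga * w2 + be * w1 = 0.
  apply: sq0; have -> : (2 * ga * w2 + be * w1) ^+ 2 = 4 * ga * (al * w1 ^+ 2 + be * w1 * w2 + ga * w2 ^+ 2) + (be ^+ 2 - 4 * al * ga) * w1 ^+ 2 by ring.
  by rewrite hw hD0; ring.
have Mv : 2 * ga * v2 + be * v1 = 0.
  apply: sq0; have -> : (2 * ga * v2 + be * v1) ^+ 2 = 4 * ga * (al * v1 ^+ 2 + be * v1 * v2 + ga * v2 ^+ 2) + (be ^+ 2 - 4 * al * ga) * v1 ^+ 2 by ring.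
  by rewrite hv hD0; ring.
have [ha|ha] := eqVneq al 0; last first.
  apply: two0; apply: (mulnz ha).
  have -> : al * (2 * (w1 * v2 - w2 * v1)) = v2 * (2 * al * w1 + be * w2) - w2 * (2 * al * v1 + be * v2) by ring.
  by rewrite Lw Lv; ring.
have [hg|hg] := eqVneq ga 0; last first.
  apply: two0; apply: (mulnz hg).
  have -> : ga * (2 * (w1 * v2 - w2 * v1)) = w1 * (2 * ga * v2 + be * v1) - v1 * (2 * ga * w2 + be * w1) by ring.
  by rewrite Mw Mv; ring.
have hb0 : be = 0.
  by apply: sq0; move: hD0; rewrite ha hg; move/eqP; rewrite !(mulr0, mul0r) subr0 => /eqP.
by move: hu; rewrite ha hg hb0 !mul0r !addr0 eqxx.
Qed.

Definition al (C : numClosedFieldType) (k : cf C) := 4 * (b3 k * b5 k - a3 k ^+ 2).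
Definition be (C : numClosedFieldType) (k : cf C) := 4 * (a3 k * b5 k - a5 k * b3 k).
Definition ga (C : numClosedFieldType) (k : cf C) := 4 * (a3 k * a5 k - b5 k ^+ 2).

Lemma qfE (C : numClosedFieldType) (k : cf C) u1 u2 :
  qf k u1 u2 = al k * u1 ^+ 2 + be k * u1 * u2 + ga k * u2 ^+ 2.
Proof. rewrite /al /be /ga; unf; ring. Qed.

Lemma getmu (C : numClosedFieldType) (D1 D2 E1 E2 : C) : ~ (D1 = 0 /\ D2 = 0) ->
  D1 * E2 = D2 * E1 -> exists m, E1 = m * D1 /\ E2 = m * D2.
Proof.
move=> hD he; have [h1|h1] := eqVneq D1 0.
  have h2 : D2 != 0 by apply/eqP => h2; apply: hD.
  exists (E2 / D2); split; last by field.
  rewrite h1 mulr0; apply: (mulnz h2); by rewrite -he h1 mul0r.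
exists (E1 / D1); split; first by field.
by apply: (mulfI h1); rewrite he; field.
Qed.

Lemma CL (C : numClosedFieldType) (k : cf C) (x1 y1 x2 y2 x3 y3 x4 y4 : C) :
  Pp k x1 y1 = 0 -> Qp k x1 y1 = 0 -> Pp k x2 y2 = 0 -> Qp k x2 y2 = 0 ->
  Pp k x3 y3 = 0 -> Qp k x3 y3 = 0 -> Pp k x4 y4 = 0 -> Qp k x4 y4 = 0 ->
  ~ (x1 = x2 /\ y1 = y2) -> ~ (x1 = x3 /\ y1 = y3) -> ~ (x1 = x4 /\ y1 = y4) ->
  ~ (x2 = x3 /\ y2 = y3) -> ~ (x2 = x4 /\ y2 = y4) -> ~ (x3 = x4 /\ y3 = y4) ->
  dt k x1 y1 != 0 -> dt k x2 y2 != 0 -> dt k x3 y3 != 0 -> dt k x4 y4 != 0 ->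
  (dt k x1 y1)^-1 + (dt k x2 y2)^-1 + (dt k x3 y3)^-1 + (dt k x4 y4)^-1 = 0 ->
  dt k x1 y1 + dt k x2 y2 = 0 ->
  [/\ dt k x2 y2 = - dt k x1 y1, dt k x4 y4 = - dt k x3 y3 &
      (dt k x3 y3 = dt k x1 y1 \/ dt k x3 y3 = - dt k x1 y1)].
Proof.
move=> P1 Q1 P2' Q2' P3 Q3 P4 Q4 n12 n13 n14 n23 n24 n34 hh1 hh2 hh3 hh4 hinv h12.
have e2 : dt k x2 y2 = - dt k x1 y1 by apply/eqP; rewrite -addr_eq0 addrC h12.
have e4 : dt k x4 y4 = - dt k x3 y3.
  move: hinv; rewrite e2 invrN subrr add0r => /eqP; rewrite addr_eq0 -invrN => /eqP.
  by move/invr_inj => ->; rewrite opprK.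
have S12 := pairsum P1 Q1 P2' Q2' n12.
have S34 := pairsum P3 Q3 P4 Q4 n34.
have S13 := pairsum P1 Q1 P3 Q3 n13.
have S14 := pairsum P1 Q1 P4 Q4 n14.
have S23 := pairsum P2' Q2' P3 Q3 n23.
have S24 := pairsum P2' Q2' P4 Q4 n24.
have qD : qf k (x2 - x1) (y2 - y1) = 0 by rewrite -S12 h12 mulr0.
have qD' : qf k (x4 - x3) (y4 - y3) = 0 by rewrite -S34 e4 addrN mulr0.
have hB : 2 * al k * (x2 - x1) * (x4 - x3) + be k * ((x2 - x1) * (y4 - y3) + (y2 - y1) * (x4 - x3))
          + 2 * ga k * (y2 - y1) * (y4 - y3) = 0.
  have -> : 2 * al k * (x2 - x1) * (x4 - x3) + be k * ((x2 - x1) * (y4 - y3) + (y2 - y1) * (x4 - x3))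
          + 2 * ga k * (y2 - y1) * (y4 - y3) =
    qf k (x4 - x1) (y4 - y1) + qf k (x3 - x2) (y3 - y2) - qf k (x3 - x1) (y3 - y1) - qf k (x4 - x2) (y4 - y2).
    by rewrite !qfE; ring.
  by rewrite -S13 -S14 -S23 -S24; ring.
have hpar : (x2 - x1) * (y4 - y3) = (y2 - y1) * (x4 - x3).
  have [hu|hu] := eqVneq (qf k (x3 - x1) (y3 - y1)) 0.
    have hu' : qf k (x4 - x1) (y4 - y1) != 0.
      apply/eqP => hu'.
      have a1' : dt k x3 y3 = - dt k x1 y1.
        apply/eqP; rewrite -addr_eq0 addrC; apply/eqP; apply: two0; by rewrite S13.
      have a2' : dt k x4 y4 = - dt k x1 y1.
        apply/eqP; rewrite -addr_eq0 addrC; apply/eqP; apply: two0; by rewrite S14.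
      move: a2'; rewrite e4 a1' opprK => /eqP; rewrite -subr_eq0 opprK -mulr2n -mulr_natl mulf_eq0.
      by rewrite pnatr_eq0 /= (negbTE hh1).
    rewrite qfE in hu'.
    by apply: (par _ _ hB hu'); rewrite -qfE.
  rewrite qfE in hu.
  by apply: (par _ _ hB hu); rewrite -qfE.
have hw : ~ (x2 - x1 = 0 /\ y2 - y1 = 0).
  by case=> /eqP; rewrite subr_eq0 => /eqP ? /eqP; rewrite subr_eq0 => /eqP ?; apply: n12.
have [m [hm1 hm2]] := getmu hw hpar.
have hm0 : m != 0.
  apply/eqP => hm; move: hm1 hm2; rewrite hm !mul0r => /eqP; rewrite subr_eq0 => /eqP ? /eqP.
  by rewrite subr_eq0 => /eqP ?; apply: n34.
have ex4 : x4 = x3 + m * (x2 - x1) by rewrite -hm1; ring.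
have ey4 : y4 = y3 + m * (y2 - y1) by rewrite -hm2; ring.
have E1 : x1 = (x1 + x2) / 2 - (x2 - x1) / 2 by field.
have F1 : y1 = (y1 + y2) / 2 - (y2 - y1) / 2 by field.
have E2 : x2 = (x1 + x2) / 2 + (x2 - x1) / 2 by field.
have F2 : y2 = (y1 + y2) / 2 + (y2 - y1) / 2 by field.
have E3 : x3 = (x3 + x4) / 2 - m * ((x2 - x1) / 2) by rewrite ex4; field.
have F3 : y3 = (y3 + y4) / 2 - m * ((y2 - y1) / 2) by rewrite ey4; field.
have E4 : x4 = (x3 + x4) / 2 + m * ((x2 - x1) / 2) by rewrite ex4; field.
have F4 : y4 = (y3 + y4) / 2 + m * ((y2 - y1) / 2) by rewrite ey4; field.
have hw2 : ~ ((x2 - x1) / 2 = 0 /\ (y2 - y1) / 2 = 0).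
  case=> /eqP; rewrite mulf_eq0 invr_eq0 pnatr_eq0 orbF => /eqP ha /eqP.
  by rewrite mulf_eq0 invr_eq0 pnatr_eq0 orbF => /eqP hb; apply: hw.
have n31 : ~ (x3 = x1 /\ y3 = y1) by case=> a b; apply: n13; rewrite a b.
have n32 : ~ (x3 = x2 /\ y3 = y2) by case=> a b; apply: n23; rewrite a b.
have [hsq hd3] := L4' E1 F1 E2 F2 E3 F3 E4 F4 P1 Q1 P2' Q2' P3 Q3 P4 Q4 hw2 hm0 hh1 h12 n31 n32.
split=> //.
have : (m - 1) * (m + 1) = 0 by rewrite -subr_sqr hsq expr1n subrr.
move/eqP; rewrite mulf_eq0 subr_eq0 addr_eq0 => /orP[] /eqP hm.
  by right; rewrite hd3 hm mulN1r.
by left; rewrite hd3 hm opprK mul1r.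
Qed.

Lemma det2 (R : comNzRingType) (A : 'M[R]_2) : \det A = A 0 0 * A 1 1 - A 0 1 * A 1 0.
Proof.
rewrite (expand_det_row _ 0) !big_ord_recl big_ord0 /cofactor !det_mx11 !mxE /=.
rewrite !expr0 ?expr1.
have E1 : lift 0 (0 : 'I_1) = 1 :> 'I_2 by apply/val_inj.
have E3 : lift (lift (0 : 'I_2) (0 : 'I_1)) (0 : 'I_1) = 0 :> 'I_2 by apply/val_inj.
have E5 : (ord0 : 'I_2) = 0 by apply/val_inj.
rewrite E3 E1 ?E5. ring.
Qed.

Lemma detDv (R : comNzRingType) (v : qvf R) (x y : R) :
  \det (Dv v (x, y)) = qdx (vP v) (x, y) * qdy (vQ v) (x, y) - qdy (vP v) (x, y) * qdx (vQ v) (x, y).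
Proof. by rewrite det2 !mxE /=. Qed.

Section Cons.
Variables (C : numClosedFieldType) (x1 x2 x3 x4 lam : C).
Definition sb3 := - (x1 + x2 + x3 + x4).
Definition sb2 := x1*x2 + x1*x3 + x1*x4 + x2*x3 + x2*x4 + x3*x4.
Definition sb1 := - (x1*x2*x3 + x1*x2*x4 + x1*x3*x4 + x2*x3*x4).
Definition sb0 := x1*x2*x3*x4.
Definition scc := (sb2 - sb3 ^+ 2 / 4) / 2.
Definition sr1 := sb1 - sb3 * scc.
Definition sr0 := sb0 - scc ^+ 2.
Definition psi (X : C) := X ^+ 2 + sb3 / 2 * X + scc.
Definition Qd (X : C) := (X - x2) * (X - x3) * (X - x4) + (X - x1) * (X - x3) * (X - x4)
   + (X - x1) * (X - x2) * (X - x4) + (X - x1) * (X - x2) * (X - x3).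
Definition vcons : qvf C := QVF (QPoly (lam * sr0 / sr1) lam 0 0 0 (lam / sr1))
   (QPoly (- (lam * scc)) (- (lam * sb3 / 2)) (- lam) (- lam) 0 0).

Lemma vcons_ham : hamiltonian vcons.
Proof. by case=> x y; rewrite /qdx /qdy /=; ring. Qed.

Hypothesis r1nz : sr1 != 0.

Lemma vcons_P (X : C) : (X - x1) * (X - x2) * (X - x3) * (X - x4) = 0 ->
  qeval (vP vcons) (X, - psi X) = 0.
Proof.
move=> hX; apply: (mulnz r1nz).
have -> : sr1 * qeval (vP vcons) (X, - psi X) = lam * (sr0 + sr1 * X + psi X ^+ 2).
  by rewrite /=; field.
have -> : sr0 + sr1 * X + psi X ^+ 2 = (X - x1) * (X - x2) * (X - x3) * (X - x4).
  by rewrite /psi /sr0 /sr1 /scc /sb0 /sb1 /sb2 /sb3; field.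
by rewrite hX mulr0.
Qed.

Lemma vcons_Q (X : C) : qeval (vQ vcons) (X, - psi X) = 0.
Proof. rewrite /= /psi; ring. Qed.

Lemma vcons_det (X : C) : \det (Dv vcons (X, - psi X)) = - (lam ^+ 2 / sr1) * Qd X.
Proof.
rewrite detDv.
have -> : qdx (vP vcons) (X, - psi X) * qdy (vQ vcons) (X, - psi X) -
  qdy (vP vcons) (X, - psi X) * qdx (vQ vcons) (X, - psi X) = - (lam ^+ 2 / sr1) * (sr1 + 2 * psi X * (2 * X + sb3 / 2)).
  by rewrite /=; field.
congr (_ * _).
by rewrite /Qd /psi /sr1 /scc /sb1 /sb2 /sb3; field.
Qed.

Lemma cons : x1 != x2 -> x1 != x3 -> x1 != x4 -> x2 != x3 -> x2 != x4 -> x3 != x4 ->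
  exists (v : qvf C) (p1 p2 p3 p4 : C * C),
    [/\ hamiltonian v, uniq [:: p1; p2; p3; p4],
        (forall p, p \in [:: p1; p2; p3; p4] -> singular_pt v p) &
        [:: \det (Dv v p1); \det (Dv v p2); \det (Dv v p3); \det (Dv v p4)] =
        [:: - (lam ^+ 2 / sr1) * ((x1 - x2) * (x1 - x3) * (x1 - x4));
            - (lam ^+ 2 / sr1) * ((x2 - x1) * (x2 - x3) * (x2 - x4));
            - (lam ^+ 2 / sr1) * ((x3 - x1) * (x3 - x2) * (x3 - x4));
            - (lam ^+ 2 / sr1) * ((x4 - x1) * (x4 - x2) * (x4 - x3))]].
Proof.
move=> h12 h13 h14 h23 h24 h34.
exists vcons, (x1, - psi x1), (x2, - psi x2), (x3, - psi x3), (x4, - psi x4); split.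
- exact: vcons_ham.
- by rewrite /= !inE !xpair_eqE (negbTE h12) (negbTE h13) (negbTE h14) (negbTE h23) (negbTE h24) (negbTE h34).
- move=> p; rewrite !inE => /or4P [] /eqP ->; (split; [apply: vcons_P; ring | apply: vcons_Q]).
- by rewrite !vcons_det /Qd; congr [:: _; _; _; _]; ring.
Qed.

Lemma r1_nz (w1 w2 w3 w4 : C) :
  x1 != x2 -> x1 != x3 -> x1 != x4 -> x2 != x3 -> x2 != x4 -> x3 != x4 ->
  w1 * ((x1 - x2) * (x1 - x3) * (x1 - x4)) = w4 * ((x4 - x1) * (x4 - x2) * (x4 - x3)) ->
  w2 * ((x2 - x1) * (x2 - x3) * (x2 - x4)) = w4 * ((x4 - x1) * (x4 - x2) * (x4 - x3)) ->
  w3 * ((x3 - x1) * (x3 - x2) * (x3 - x4)) = w4 * ((x4 - x1) * (x4 - x2) * (x4 - x3)) ->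
  w1 + w2 != 0 -> w1 + w3 != 0 -> w1 + w4 != 0 -> sr1 != 0.
Proof.
move=> h12 h13 h14 h23 h24 h34 L1 L2 L3 q12 q13 q14.
have hD1 : (x1 - x2) * (x1 - x3) * (x1 - x4) != 0.
  by rewrite !mulf_neq0 // subr_eq0.
apply/eqP => hr.
pose y := - sb3 / 2 - x1.
have hA : (y - x1) * (y - x2) * (y - x3) * (y - x4) = sr1 * (y - x1).
  by rewrite /y /sr1 /scc /sb1 /sb2 /sb3; field.
have hB : Qd y = - Qd x1 + 2 * sr1.
  by rewrite /y /Qd /sr1 /scc /sb1 /sb2 /sb3; field.
rewrite hr mul0r in hA; rewrite hr mulr0 addr0 in hB.
have hQ1 : Qd x1 = (x1 - x2) * (x1 - x3) * (x1 - x4) by rewrite /Qd; ring.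
move/eqP: hA; rewrite !mulf_eq0 !subr_eq0 -!orbA => /or4P [] /eqP hy.
- move: hB; rewrite hy => /eqP; rewrite -subr_eq0 opprK -mulr2n -mulr_natl mulf_eq0 pnatr_eq0 /= hQ1.
  by rewrite (negbTE hD1).
- have hQ2 : Qd x2 = (x2 - x1) * (x2 - x3) * (x2 - x4) by rewrite /Qd; ring.
  move: hB; rewrite hy hQ2 hQ1 => hB.
  move: L2; rewrite hB -L1 => /eqP; rewrite -subr_eq0.
  have -> : w2 * - ((x1 - x2) * (x1 - x3) * (x1 - x4)) - w1 * ((x1 - x2) * (x1 - x3) * (x1 - x4)) = - ((w1 + w2) * ((x1 - x2) * (x1 - x3) * (x1 - x4))) by ring.
  by rewrite oppr_eq0 mulf_eq0 (negbTE q12) (negbTE hD1).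
- have hQ3 : Qd x3 = (x3 - x1) * (x3 - x2) * (x3 - x4) by rewrite /Qd; ring.
  move: hB; rewrite hy hQ3 hQ1 => hB.
  move: L3; rewrite hB -L1 => /eqP; rewrite -subr_eq0.
  have -> : w3 * - ((x1 - x2) * (x1 - x3) * (x1 - x4)) - w1 * ((x1 - x2) * (x1 - x3) * (x1 - x4)) = - ((w1 + w3) * ((x1 - x2) * (x1 - x3) * (x1 - x4))) by ring.
  by rewrite oppr_eq0 mulf_eq0 (negbTE q13) (negbTE hD1).
- have hQ4 : Qd x4 = (x4 - x1) * (x4 - x2) * (x4 - x3) by rewrite /Qd; ring.
  move: hB; rewrite hy hQ4 hQ1 => hB.
  move: L1; rewrite hB => /eqP; rewrite -subr_eq0.
  have -> : w1 * ((x1 - x2) * (x1 - x3) * (x1 - x4)) - w4 * - ((x1 - x2) * (x1 - x3) * (x1 - x4)) = ((w1 + w4) * ((x1 - x2) * (x1 - x3) * (x1 - x4))) by ring.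
  by rewrite mulf_eq0 (negbTE q14) (negbTE hD1).
Qed.
End Cons.

Lemma keyw (C : numClosedFieldType) (wa wb wc wd s : C) :
  wa + wb + wc + wd = 0 -> s ^+ 2 = wa * wb * wc * wd -> s ^+ 2 = (wa * wb) ^+ 2 ->
  wa != 0 -> wb != 0 -> wc + wa != 0 -> wc + wb != 0 -> False.
Proof.
move=> hS hs1 hs2 ha hb hca hcb.
have : wa * wb * ((wc + wa) * (wc + wb)) = 0.
  have e := etrans (esym hs1) hs2.
  have -> : wa * wb * ((wc + wa) * (wc + wb)) = wa * wb * wc * (wa + wb + wc + wd) + ((wa * wb) ^+ 2 - wa * wb * wc * wd) by ring.
  by rewrite hS -e subrr; ring.
by move/eqP; rewrite !mulf_eq0 (negbTE ha) (negbTE hb) (negbTE hca) (negbTE hcb).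
Qed.

Lemma lagr (C : numClosedFieldType) (w1 w2 w3 w4 x1 x2 x3 x4 : C) :
  w1 + w2 + w3 + w4 = 0 -> w1 * x1 + w2 * x2 + w3 * x3 + w4 * x4 = 0 ->
  w1 * x1 ^+ 2 + w2 * x2 ^+ 2 + w3 * x3 ^+ 2 + w4 * x4 ^+ 2 = 0 ->
  [/\ w1 * ((x1 - x2) * (x1 - x3) * (x1 - x4)) = w4 * ((x4 - x1) * (x4 - x2) * (x4 - x3)),
      w2 * ((x2 - x1) * (x2 - x3) * (x2 - x4)) = w4 * ((x4 - x1) * (x4 - x2) * (x4 - x3)) &
      w3 * ((x3 - x1) * (x3 - x2) * (x3 - x4)) = w4 * ((x4 - x1) * (x4 - x2) * (x4 - x3))].
Proof.
move=> E0 E1 E2; split; apply/eqP; rewrite -subr_eq0; apply/eqP.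
- have -> : w1 * ((x1 - x2) * (x1 - x3) * (x1 - x4)) - w4 * ((x4 - x1) * (x4 - x2) * (x4 - x3)) =
     (x1 - x4) * ((w1 * x1 ^+ 2 + w2 * x2 ^+ 2 + w3 * x3 ^+ 2 + w4 * x4 ^+ 2) - (x2 + x3) * (w1 * x1 + w2 * x2 + w3 * x3 + w4 * x4) + x2 * x3 * (w1 + w2 + w3 + w4)) by ring.
  by rewrite E0 E1 E2; ring.
- have -> : w2 * ((x2 - x1) * (x2 - x3) * (x2 - x4)) - w4 * ((x4 - x1) * (x4 - x2) * (x4 - x3)) =
     (x2 - x4) * ((w1 * x1 ^+ 2 + w2 * x2 ^+ 2 + w3 * x3 ^+ 2 + w4 * x4 ^+ 2) - (x1 + x3) * (w1 * x1 + w2 * x2 + w3 * x3 + w4 * x4) + x1 * x3 * (w1 + w2 + w3 + w4)) by ring.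
  by rewrite E0 E1 E2; ring.
- have -> : w3 * ((x3 - x1) * (x3 - x2) * (x3 - x4)) - w4 * ((x4 - x1) * (x4 - x2) * (x4 - x3)) =
     (x3 - x4) * ((w1 * x1 ^+ 2 + w2 * x2 ^+ 2 + w3 * x3 ^+ 2 + w4 * x4 ^+ 2) - (x1 + x2) * (w1 * x1 + w2 * x2 + w3 * x3 + w4 * x4) + x1 * x2 * (w1 + w2 + w3 + w4)) by ring.
  by rewrite E0 E1 E2; ring.
Qed.

Lemma backward1 (C : numClosedFieldType) (d1 d2 d3 d4 : C) :
  d1 != 0 -> d2 != 0 -> d3 != 0 -> d4 != 0 ->
  d1^-1 + d2^-1 + d3^-1 + d4^-1 = 0 ->
  d1 + d2 != 0 -> d1 + d3 != 0 -> d1 + d4 != 0 -> d2 + d3 != 0 -> d2 + d4 != 0 -> d3 + d4 != 0 ->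
  exists (v : qvf C) (p1 p2 p3 p4 : C * C),
    [/\ hamiltonian v, uniq [:: p1; p2; p3; p4],
        (forall p, p \in [:: p1; p2; p3; p4] -> singular_pt v p) &
        [:: \det (Dv v p1); \det (Dv v p2); \det (Dv v p3); \det (Dv v p4)] = [:: d1; d2; d3; d4]].
Proof.
move=> n1 n2 n3 n4 hEJ s12 s13 s14 s23 s24 s34.
pose w1 := d1^-1; pose w2 := d2^-1; pose w3 := d3^-1; pose w4 := d4^-1.
have m1 : w1 != 0 by rewrite invr_eq0.
have m2 : w2 != 0 by rewrite invr_eq0.
have m3 : w3 != 0 by rewrite invr_eq0.
have m4 : w4 != 0 by rewrite invr_eq0.
have pw (a b : C) : a != 0 -> b != 0 -> a + b != 0 -> a^-1 + b^-1 != 0.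
  move=> ha hb hab; have -> : a^-1 + b^-1 = (a + b) * (a^-1 * b^-1) by rewrite mulrDl mulrA mulfV // mul1r mulrCA mulfV // mulr1 addrC.
  by rewrite !mulf_neq0 // invr_eq0.
have q12 := pw _ _ n1 n2 s12; have q13 := pw _ _ n1 n3 s13; have q14 := pw _ _ n1 n4 s14.
have q23 := pw _ _ n2 n3 s23; have q24 := pw _ _ n2 n4 s24; have q34 := pw _ _ n3 n4 s34.
rewrite -/w1 -/w2 -/w3 -/w4 in q12 q13 q14 q23 q24 q34 hEJ.
have q21 : w2 + w1 != 0 by rewrite addrC.
have q31 : w3 + w1 != 0 by rewrite addrC.
have q41 : w4 + w1 != 0 by rewrite addrC.
have q32 : w3 + w2 != 0 by rewrite addrC.
have q42 : w4 + w2 != 0 by rewrite addrC.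
have q43 : w4 + w3 != 0 by rewrite addrC.
pose D := w1 * w2 * w3 * w4.
pose s := sqrtC D.
have hs : s ^+ 2 = D by rewrite sqrtCK.
pose X1 := w3 * (w1 * w2 + s); pose X2 := w1 * w3 * (w2 + w4); pose X3 := w1 * (w2 * w3 - s); pose X4 : C := 0.
have hD : D != 0 by rewrite !mulf_neq0.
have h14 : X1 != X4.
  rewrite /X1 /X4 mulf_eq0 (negbTE m3) /=; apply/eqP => he.
  have hs' : s = - (w1 * w2) by apply/eqP; rewrite -addr_eq0 addrC he.
  apply: (keyw (wa := w1) (wb := w2) (wc := w3) (wd := w4) (s := s)) => //.
  by rewrite hs' sqrrN.
have h24 : X2 != X4 by rewrite /X2 /X4 !mulf_neq0.
have h34 : X3 != X4.
  rewrite /X3 /X4 mulf_eq0 (negbTE m1) /=; apply/eqP => he.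
  have hs' : s = w2 * w3 by apply/eqP; rewrite eq_sym -subr_eq0 he.
  apply: (keyw (wa := w2) (wb := w3) (wc := w1) (wd := w4) (s := s)).
  - by rewrite -hEJ; ring.
  - by rewrite hs /D; ring.
  - by rewrite hs'.
  - done.
  - done.
  - done.
  - done.
have h12 : X1 != X2.
  apply/eqP => he.
  have e : w3 * (s - w1 * w4) = X1 - X2 by rewrite /X1 /X2; ring.
  rewrite he subrr in e; move/eqP: e; rewrite mulf_eq0 (negbTE m3) /= subr_eq0 => /eqP hs'.
  apply: (keyw (wa := w1) (wb := w4) (wc := w2) (wd := w3) (s := s)).
  - by rewrite -hEJ; ring.
  - by rewrite hs /D; ring.
  - by rewrite hs'.
  - done.
  - done.
  - done.
  - done.
have h13 : X1 != X3.
  apply/eqP => he.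
  have e : (w1 + w3) * s = X1 - X3 by rewrite /X1 /X3; ring.
  rewrite he subrr in e; move/eqP: e; rewrite mulf_eq0 (negbTE q13) /= => /eqP hs0.
  by move: hD; rewrite -hs hs0 expr0n /= eqxx.
have h23 : X2 != X3.
  apply/eqP => he.
  have e : w1 * (s + w3 * w4) = X2 - X3 by rewrite /X2 /X3; ring.
  rewrite he subrr in e; move/eqP: e; rewrite mulf_eq0 (negbTE m1) /= addr_eq0 => /eqP hs'.
  apply: (keyw (wa := w3) (wb := w4) (wc := w1) (wd := w2) (s := s)).
  - by rewrite -hEJ; ring.
  - by rewrite hs /D; ring.
  - by rewrite hs' sqrrN.
  - done.
  - done.
  - done.
  - done.
have E1 : w1 * X1 + w2 * X2 + w3 * X3 + w4 * X4 = 0.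
  have -> : w1 * X1 + w2 * X2 + w3 * X3 + w4 * X4 = w3 * w1 * w2 * (w1 + w2 + w3 + w4) by rewrite /X1 /X2 /X3 /X4; ring.
  by rewrite hEJ mulr0.
have E2 : w1 * X1 ^+ 2 + w2 * X2 ^+ 2 + w3 * X3 ^+ 2 + w4 * X4 ^+ 2 = 0.
  have -> : w1 * X1 ^+ 2 + w2 * X2 ^+ 2 + w3 * X3 ^+ 2 + w4 * X4 ^+ 2 =
    w3 * w1 * ((w1 + w3) * (s ^+ 2 - w1 * w2 * w3 * w4) + w1 * w2 * w3 * (w2 + w4) * (w1 + w2 + w3 + w4)) by rewrite /X1 /X2 /X3 /X4; ring.
  by rewrite hEJ hs /D subrr; ring.
have [L1 L2 L3] := lagr hEJ E1 E2.
pose K := w4 * ((X4 - X1) * (X4 - X2) * (X4 - X3)).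
have hK : K != 0.
  rewrite /K !mulf_neq0 // subr_eq0 eq_sym //.
have hr1 := r1_nz h12 h13 h14 h23 h24 h34 L1 L2 L3 q12 q13 q14.
pose lam := sqrtC (- sr1 X1 X2 X3 X4 / K).
have hlam : lam ^+ 2 = - sr1 X1 X2 X3 X4 / K by rewrite sqrtCK.
have [v [p1 [p2 [p3 [p4 [hv hu hsing hl]]]]]] := cons lam hr1 h12 h13 h14 h23 h24 h34.
have fixd (wj Dj dj : C) : wj = dj^-1 -> dj != 0 -> wj * Dj = K -> - (lam ^+ 2 / sr1 X1 X2 X3 X4) * Dj = dj.
  move=> hw hdj hWD.
  have -> : Dj = K * dj by rewrite -hWD hw mulrAC mulVf // mul1r.
  rewrite hlam; field.
  by rewrite hK hr1.
rewrite (fixd w1 _ d1) // (fixd w2 _ d2) // (fixd w3 _ d3) // (fixd w4 _ d4) // in hl.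
exists v, p1, p2, p3, p4; split=> //.
Qed.

Definition Fp (C : numClosedFieldType) (s : seq C) := \prod_(x <- s) \prod_(y <- s) (x + y).

Lemma Fp_perm (C : numClosedFieldType) (s t : seq C) : perm_eq s t -> Fp s = Fp t.
Proof.
move=> hp; rewrite /Fp (perm_big _ hp); apply: eq_bigr => x _; exact: perm_big.
Qed.

Lemma Fp4 (C : numClosedFieldType) (a b c d : C) :
  Fp [:: a; b; c; d] = (a + a) * (a + b) * (a + c) * (a + d) * ((b + a) * (b + b) * (b + c) * (b + d))
    * ((c + a) * (c + b) * (c + c) * (c + d)) * ((d + a) * (d + b) * (d + c) * (d + d)).
Proof. by rewrite /Fp !big_cons !big_nil !mulr1 !mulrA. Qed.

Lemma pf_iff (C : numClosedFieldType) (a b c d : C) :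
  a != 0 -> b != 0 -> c != 0 -> d != 0 ->
  (forall j k : 'I_4, j != k -> [:: a; b; c; d]`_j + [:: a; b; c; d]`_k != 0) <-> Fp [:: a; b; c; d] != 0.
Proof.
move=> ha hb hc hd.
have dbl (x : C) : x != 0 -> x + x != 0.
  by move=> hx; rewrite -mulr2n -mulr_natl mulf_neq0 // pnatr_eq0.
split.
- move=> H.
  have H' (j k : nat) (hj : (j < 4)%N) (hk : (k < 4)%N) : j != k -> [:: a; b; c; d]`_j + [:: a; b; c; d]`_k != 0.
    by move=> hjk; apply: (H (Ordinal hj) (Ordinal hk)).
  rewrite Fp4 !mulf_neq0 ?dbl //.
  1-12: first [ exact: (H' 0%N 1%N) | exact: (H' 0%N 2%N) | exact: (H' 0%N 3%N) | exact: (H' 1%N 0%N)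
             | exact: (H' 1%N 2%N) | exact: (H' 1%N 3%N) | exact: (H' 2%N 0%N) | exact: (H' 2%N 1%N)
             | exact: (H' 2%N 3%N) | exact: (H' 3%N 0%N) | exact: (H' 3%N 1%N) | exact: (H' 3%N 2%N) ].
- move=> hF j k _.
  case: j => [[|[|[|[|?]]]] hj] //; case: k => [[|[|[|[|?]]]] hk] //=;
  apply: contraNneq hF => hX; by rewrite Fp4 hX !(mul0r, mulr0).
Qed.

Lemma tocf (C : numClosedFieldType) (v : qvf C) : hamiltonian v -> exists k : cf C, forall x y,
  [/\ qeval (vP v) (x, y) = Pp k x y, qeval (vQ v) (x, y) = Qp k x y & \det (Dv v (x, y)) = dt k x y].
Proof.
case: v => [[a0' a1' a2' a3' a4' a5'] [b0' b1' b2' b3' b4' b5']] H.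
have h0 := H (0, 0); have h1 := H (1, 0); have h2 := H (0, 1).
rewrite /qdx /qdy /= in h0 h1 h2.
have eb2 : b2' = - a1'.
  apply/eqP; rewrite -subr_eq0 opprK; apply/eqP; rewrite -h0; ring.
have e1 := f_equal2 (fun a b => a - b) h1 h0; rewrite subrr /= in e1.
have e2 := f_equal2 (fun a b => a - b) h2 h0; rewrite subrr /= in e2.
have eb4 : b4' = - (a3' *+ 2).
  apply/eqP; rewrite -subr_eq0 opprK; apply/eqP; rewrite -e1; ring.
have ea4 : a4' = - (b5' *+ 2).
  apply/eqP; rewrite -subr_eq0 opprK; apply/eqP; rewrite -e2; ring.
subst b2' b4' a4'.
exists (CF a0' a1' a2' a3' a5' b0' b1' b3' b5') => x y; split.
- by rewrite /= /Pp /=; ring.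
- by rewrite /= /Qp /=; ring.
- by rewrite detDv /= /dt /Px /Py /Qx /=; ring.
Qed.

Lemma backward2 (C : numClosedFieldType) (d : C) : d != 0 ->
  exists (v : qvf C) (p1 p2 p3 p4 : C * C),
    [/\ hamiltonian v, uniq [:: p1; p2; p3; p4],
        (forall p, p \in [:: p1; p2; p3; p4] -> singular_pt v p) &
        [:: \det (Dv v p1); \det (Dv v p2); \det (Dv v p3); \det (Dv v p4)] = [:: d; -d; d; -d]].
Proof.
move=> hd.
exists (QVF (QPoly (- (d ^+ 2 / 16)) 0 0 0 0 1) (QPoly 1 0 0 (-1) 0 0)),
  (1, d / 4), (-1, d / 4), (-1, - (d / 4)), (1, - (d / 4)).
have h1 : (1 : C) != -1.
  by rewrite -subr_eq0 opprK -mulr2n -mulr_natl mulr1 pnatr_eq0.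
have h2 : d / 4 != - (d / 4).
  rewrite -subr_eq0 opprK; apply/eqP => h.
  have e : d = 2 * (d / 4 + d / 4) by field.
  by move: hd; rewrite e h mulr0 eqxx.
have h1' : (-1 : C) != 1 by rewrite eq_sym.
have h2' : - (d / 4) != d / 4 by rewrite eq_sym.
split.
- by case=> x y; rewrite /qdx /qdy /=; ring.
- rewrite /= !inE !xpair_eqE ?(negbTE h1) ?(negbTE h2) ?(negbTE h1') ?(negbTE h2') /= ?andbF //=.
- move=> p; rewrite !inE => /or4P [] /eqP -> ; split; rewrite /=; by field.
- by rewrite !detDv /=; congr [:: _; _; _; _]; field.
Qed.

Lemma pne (C : numClosedFieldType) (a b c d : C) : (a, b) != (c, d) -> ~ (a = c /\ b = d).
Proof. by move=> h [e1 e2]; move: h; rewrite e1 e2 eqxx. Qed.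

Lemma pair_zero (C : numClosedFieldType) (a b c d : C) :
  a != 0 -> b != 0 -> c != 0 -> d != 0 -> Fp [:: a; b; c; d] = 0 ->
  a + b = 0 \/ a + c = 0 \/ a + d = 0 \/ b + c = 0 \/ b + d = 0 \/ c + d = 0.
Proof.
move=> ha hb hc hd hF.
have dbl (x : C) : x != 0 -> x + x != 0.
  by move=> hx; rewrite -mulr2n -mulr_natl mulf_neq0 // pnatr_eq0.
have [e|n12] := eqVneq (a + b) 0; first by left.
have [e|n13] := eqVneq (a + c) 0; first by right; left.
have [e|n14] := eqVneq (a + d) 0; first by do 2 right; left.
have [e|n23] := eqVneq (b + c) 0; first by do 3 right; left.
have [e|n24] := eqVneq (b + d) 0; first by do 4 right; left.
have [e|n34] := eqVneq (c + d) 0; first by do 5 right.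
exfalso; move: hF; apply/eqP.
rewrite Fp4 !mulf_neq0 //; try (by apply: dbl); by rewrite addrC.
Qed.

Lemma fin_case (C : numClosedFieldType) (a b c e : C) :
  b = - a -> e = - c -> (c = a \/ c = - a) -> perm_eq [:: a; b; c; e] [:: a; - a; a; - a].
Proof. move=> -> ->; case=> ->; apply/permP => f /=; rewrite ?opprK; lia. Qed.

Lemma sum_inv4 (C : numClosedFieldType) (a b c d : C) :
  \sum_(x <- [:: a; b; c; d]) x^-1 = a^-1 + b^-1 + c^-1 + d^-1.
Proof. by rewrite !big_cons big_nil addr0 !addrA. Qed.

Lemma p1324 (T : eqType) (a b c d : T) : perm_eq [:: a; b; c; d] [:: a; c; b; d].
Proof. by apply/permP => f /=; lia. Qed.
Lemma p1423 (T : eqType) (a b c d : T) : perm_eq [:: a; b; c; d] [:: a; d; b; c].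
Proof. by apply/permP => f /=; lia. Qed.
Lemma p2314 (T : eqType) (a b c d : T) : perm_eq [:: a; b; c; d] [:: b; c; a; d].
Proof. by apply/permP => f /=; lia. Qed.
Lemma p2413 (T : eqType) (a b c d : T) : perm_eq [:: a; b; c; d] [:: b; d; a; c].
Proof. by apply/permP => f /=; lia. Qed.
Lemma p3412 (T : eqType) (a b c d : T) : perm_eq [:: a; b; c; d] [:: c; d; a; b].
Proof. by apply/permP => f /=; lia. Qed.

Lemma forward (C : numClosedFieldType) (d1 d2 d3 d4 : C) (v : qvf C) (p1 p2 p3 p4 : C * C) :
  d1 != 0 -> d2 != 0 -> d3 != 0 -> d4 != 0 ->
  d1^-1 + d2^-1 + d3^-1 + d4^-1 = 0 ->
  hamiltonian v -> uniq [:: p1; p2; p3; p4] ->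
  (forall p, p \in [:: p1; p2; p3; p4] -> singular_pt v p /\ nondegenerate v p) ->
  perm_eq [:: \det (Dv v p1); \det (Dv v p2); \det (Dv v p3); \det (Dv v p4)] [:: d1; d2; d3; d4] ->
  ((forall j k : 'I_4, j != k ->
      [:: d1; d2; d3; d4]`_j + [:: d1; d2; d3; d4]`_k != 0)
   \/ (exists d : C, d != 0 /\ perm_eq [:: d1; d2; d3; d4] [:: d; -d; d; -d])).
Proof.
move=> n1 n2 n3 n4 hEJ hv hu hs hp.
have [F|F] := eqVneq (Fp [:: d1; d2; d3; d4]) 0; last by left; apply/pf_iff.
right.
have [k hk] := tocf hv.
have hs1 := hs p1; have hs2 := hs p2; have hs3 := hs p3; have hs4 := hs p4.
move: hs1 hs2 hs3 hs4 hu hp; clear hs.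
case: p1 => x1 y1; case: p2 => x2 y2; case: p3 => x3 y3; case: p4 => x4 y4.
rewrite !inE !eqxx ?orbT => /(_ isT) [[P1 Q1] N1] /(_ isT) [[P2 Q2] N2] /(_ isT) [[P3 Q3] N3] /(_ isT) [[P4 Q4] N4] hu.
case: (hk x1 y1) => eP1 eQ1 eD1; case: (hk x2 y2) => eP2 eQ2 eD2.
case: (hk x3 y3) => eP3 eQ3 eD3; case: (hk x4 y4) => eP4 eQ4 eD4.
rewrite eP1 in P1; rewrite eP2 in P2; rewrite eP3 in P3; rewrite eP4 in P4.
rewrite eQ1 in Q1; rewrite eQ2 in Q2; rewrite eQ3 in Q3; rewrite eQ4 in Q4.
move: N1 N2 N3 N4; rewrite /nondegenerate eD1 eD2 eD3 eD4 => N1 N2 N3 N4.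
move=> hp.
have u12 : (x1, y1) != (x2, y2) by apply: contraTneq hu => ->; rewrite /= !inE eqxx.
have u13 : (x1, y1) != (x3, y3) by apply: contraTneq hu => ->; rewrite /= !inE eqxx ?orbT.
have u14 : (x1, y1) != (x4, y4) by apply: contraTneq hu => ->; rewrite /= !inE eqxx ?orbT.
have u23 : (x2, y2) != (x3, y3) by apply: contraTneq hu => ->; rewrite /= !inE eqxx ?orbT ?andbF.
have u24 : (x2, y2) != (x4, y4) by apply: contraTneq hu => ->; rewrite /= !inE eqxx ?orbT ?andbF.
have u34 : (x3, y3) != (x4, y4) by apply: contraTneq hu => ->; rewrite /= !inE eqxx ?orbT ?andbF.
have hEJh : (dt k x1 y1)^-1 + (dt k x2 y2)^-1 + (dt k x3 y3)^-1 + (dt k x4 y4)^-1 = 0.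
  have e : \sum_(x <- [:: dt k x1 y1; dt k x2 y2; dt k x3 y3; dt k x4 y4]) x^-1 = \sum_(x <- [:: d1; d2; d3; d4]) x^-1 := perm_big _ hp.
  by rewrite !sum_inv4 hEJ in e.
have Fh : Fp [:: dt k x1 y1; dt k x2 y2; dt k x3 y3; dt k x4 y4] = 0 by rewrite (Fp_perm hp).
have n12 := pne u12.
have n21 : ~ (x2 = x1 /\ y2 = y1) by case=> e1 e2; apply: n12; rewrite e1 e2.
have n13 := pne u13.
have n31 : ~ (x3 = x1 /\ y3 = y1) by case=> e1 e2; apply: n13; rewrite e1 e2.
have n14 := pne u14.
have n41 : ~ (x4 = x1 /\ y4 = y1) by case=> e1 e2; apply: n14; rewrite e1 e2.
have n23 := pne u23.
have n32 : ~ (x3 = x2 /\ y3 = y2) by case=> e1 e2; apply: n23; rewrite e1 e2.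
have n24 := pne u24.
have n42 : ~ (x4 = x2 /\ y4 = y2) by case=> e1 e2; apply: n24; rewrite e1 e2.
have n34 := pne u34.
have n43 : ~ (x4 = x3 /\ y4 = y3) by case=> e1 e2; apply: n34; rewrite e1 e2.
have hp' : perm_eq [:: d1; d2; d3; d4] [:: dt k x1 y1; dt k x2 y2; dt k x3 y3; dt k x4 y4] by rewrite perm_sym.
have [e|[e|[e|[e|[e|e]]]]] := pair_zero N1 N2 N3 N4 Fh.
- have hEJ' : (dt k x1 y1)^-1 + (dt k x2 y2)^-1 + (dt k x3 y3)^-1 + (dt k x4 y4)^-1 = 0 by rewrite -hEJh; ring.
  have [ej el ek] := CL P1 Q1 P2 Q2 P3 Q3 P4 Q4 n12 n13 n14 n23 n24 n34 N1 N2 N3 N4 hEJ' e.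
  exists (dt k x1 y1); split=> //.
  apply: (perm_trans hp'); apply: (perm_trans _ (fin_case ej el ek)); last first.
  by [].
- have hEJ' : (dt k x1 y1)^-1 + (dt k x3 y3)^-1 + (dt k x2 y2)^-1 + (dt k x4 y4)^-1 = 0 by rewrite -hEJh; ring.
  have [ej el ek] := CL P1 Q1 P3 Q3 P2 Q2 P4 Q4 n13 n12 n14 n32 n34 n24 N1 N3 N2 N4 hEJ' e.
  exists (dt k x1 y1); split=> //.
  apply: (perm_trans hp'); apply: (perm_trans _ (fin_case ej el ek)); last first.
  exact: p1324.
- have hEJ' : (dt k x1 y1)^-1 + (dt k x4 y4)^-1 + (dt k x2 y2)^-1 + (dt k x3 y3)^-1 = 0 by rewrite -hEJh; ring.
  have [ej el ek] := CL P1 Q1 P4 Q4 P2 Q2 P3 Q3 n14 n12 n13 n42 n43 n23 N1 N4 N2 N3 hEJ' e.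
  exists (dt k x1 y1); split=> //.
  apply: (perm_trans hp'); apply: (perm_trans _ (fin_case ej el ek)); last first.
  exact: p1423.
- have hEJ' : (dt k x2 y2)^-1 + (dt k x3 y3)^-1 + (dt k x1 y1)^-1 + (dt k x4 y4)^-1 = 0 by rewrite -hEJh; ring.
  have [ej el ek] := CL P2 Q2 P3 Q3 P1 Q1 P4 Q4 n23 n21 n24 n31 n34 n14 N2 N3 N1 N4 hEJ' e.
  exists (dt k x2 y2); split=> //.
  apply: (perm_trans hp'); apply: (perm_trans _ (fin_case ej el ek)); last first.
  exact: p2314.
- have hEJ' : (dt k x2 y2)^-1 + (dt k x4 y4)^-1 + (dt k x1 y1)^-1 + (dt k x3 y3)^-1 = 0 by rewrite -hEJh; ring.
  have [ej el ek] := CL P2 Q2 P4 Q4 P1 Q1 P3 Q3 n24 n21 n23 n41 n43 n13 N2 N4 N1 N3 hEJ' e.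
  exists (dt k x2 y2); split=> //.
  apply: (perm_trans hp'); apply: (perm_trans _ (fin_case ej el ek)); last first.
  exact: p2413.
- have hEJ' : (dt k x3 y3)^-1 + (dt k x4 y4)^-1 + (dt k x1 y1)^-1 + (dt k x2 y2)^-1 = 0 by rewrite -hEJh; ring.
  have [ej el ek] := CL P3 Q3 P4 Q4 P1 Q1 P2 Q2 n34 n31 n32 n41 n42 n12 N3 N4 N1 N2 hEJ' e.
  exists (dt k x3 y3); split=> //.
  apply: (perm_trans hp'); apply: (perm_trans _ (fin_case ej el ek)); last first.
  exact: p3412.
Qed.

Unset Implicit Arguments.
Set Strict Implicit.

Theorem theorem5p4 (C : numClosedFieldType) (d1 d2 d3 d4 : C) :
  d1 != 0 -> d2 != 0 -> d3 != 0 -> d4 != 0 ->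
  d1^-1 + d2^-1 + d3^-1 + d4^-1 = 0 ->
  (exists (v : qvf C) (p1 p2 p3 p4 : C * C),
      [/\ Defs.hamiltonian v,
          uniq [:: p1; p2; p3; p4],
          (forall p, p \in [:: p1; p2; p3; p4] ->
             Defs.singular_pt v p /\ Defs.nondegenerate v p) &
          perm_eq [:: \det (Defs.Dv v p1); \det (Defs.Dv v p2); \det (Defs.Dv v p3); \det (Defs.Dv v p4)]
                  [:: d1; d2; d3; d4]])
  <->
  ((forall j k : 'I_4, j != k ->
      [:: d1; d2; d3; d4]`_j + [:: d1; d2; d3; d4]`_k != 0)
   \/ (exists d : C, d != 0 /\ perm_eq [:: d1; d2; d3; d4] [:: d; -d; d; -d])).
Proof.
move=> n1 n2 n3 n4 hEJ; split.
  by case=> v [p1 [p2 [p3 [p4 [hv hu hs hp]]]]]; exact: (forward n1 n2 n3 n4 hEJ hv hu hs hp).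
case=> [H | [d [hd hp]]].
  have s12 : d1 + d2 != 0 := H (@Ordinal 4 0 isT) (@Ordinal 4 1 isT) isT.
  have s13 : d1 + d3 != 0 := H (@Ordinal 4 0 isT) (@Ordinal 4 2 isT) isT.
  have s14 : d1 + d4 != 0 := H (@Ordinal 4 0 isT) (@Ordinal 4 3 isT) isT.
  have s23 : d2 + d3 != 0 := H (@Ordinal 4 1 isT) (@Ordinal 4 2 isT) isT.
  have s24 : d2 + d4 != 0 := H (@Ordinal 4 1 isT) (@Ordinal 4 3 isT) isT.
  have s34 : d3 + d4 != 0 := H (@Ordinal 4 2 isT) (@Ordinal 4 3 isT) isT.
  have [v [p1 [p2 [p3 [p4 [hv hu hs hl]]]]]] := backward1 n1 n2 n3 n4 hEJ s12 s13 s14 s23 s24 s34.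
  exists v, p1, p2, p3, p4; split => //; last by rewrite hl.
  move=> p hp; split; first exact: hs.
  case: hl => e1 e2 e3 e4; move: hp; rewrite /nondegenerate !inE => /or4P [] /eqP ->.
  - by rewrite e1.
  - by rewrite e2.
  - by rewrite e3.
  - by rewrite e4.
have [v [p1 [p2 [p3 [p4 [hv hu hs hl]]]]]] := backward2 hd.
have hd' : - d != 0 by rewrite oppr_eq0.
exists v, p1, p2, p3, p4; split => //; last by rewrite hl perm_sym.
move=> p hp'; split; first exact: hs.
case: hl => e1 e2 e3 e4; move: hp'; rewrite /nondegenerate !inE => /or4P [] /eqP ->.
- by rewrite e1.
- by rewrite e2.
- by rewrite e3.
- by rewrite e4.
Qed.
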